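(* Assume (QE) and (FS), and let $G$ be finite. Let $(K,\bar\sigma)\subseteq(K',\bar\sigma')$ be an extension of substructures with $G$-action such that the action of $G$ on $K$ is faithful and $\operatorname{dcl}(K)=K$. If $K^G$ is algebraically $K$-strongly PAC, then the extension $K^G\subseteq (K')^G$ is regular.
   Context: $L$ is a first-order language, $T$ a complete $L$-theory, $\mathfrak C$ a monster model; $\operatorname{acl}$, $\operatorname{dcl}$ computed in $\mathfrak C$; substructures are small $L$-substructures of $\mathfrak C$; forking is in the sense of $T$. (QE): $T$ has quantifier elimination. (FS): $T$ codes finite sets, i.e. every finite set of real tuples has a code which is a real tuple. For small $F\subseteq K$: $F\subseteq K$ is primary if $\operatorname{dcl}(K)\cap\operatorname{acl}(F)=\operatorname{dcl}(F)$, and regular if it is primary and $F=\operatorname{dcl}(F)$. For $F=\operatorname{dcl}(F)\subseteq K$: $F$ is algebraically $K$-strongly PAC if every algebraic $p\in S(F)$ which has a unique non-forking extension over $K$ is realized in $F$. $L_G=L\cup\{\sigma_g:g\in G\}$. A substructure with $G$-action is $(K,\bar\sigma)$ with $K$ a substructure of $\mathfrak C$, each $\sigma_g\in\operatorname{Aut}(K)$, $g\mapsto\sigma_g$ a homomorphism; an extension $(K,\bar\sigma)\subseteq(K',\bar\sigma')$ means $K\subseteq K'$ and $\sigma'_g|_K=\sigma_g$. Faithful: $g\ne h\Rightarrow\sigma_g\neq\sigma_h$. $K^G=\{a\in K:\sigma_g(a)=a\ \forall g\}$. *)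

(* Defs.v *)
From HB Require Import structures.
From mathcomp Require Import all_boot all_fingroup.
From Stdlib Require List.


Set Implicit Arguments.
Unset Strict Implicit.
Unset Printing Implicit Defensive.

Record lang := Lang {
  Func : Type; Rel : Type;
  farity : Func -> nat; rarity : Rel -> nat }.

Inductive term (L : lang) : Type :=
| Var : nat -> term L
| App : forall f : Func L, ('I_(farity f) -> term L) -> term L.

Inductive formula (L : lang) : Type :=
| FEq : term L -> term L -> formula L
| FRel : forall r : Rel L, ('I_(rarity r) -> term L) -> formula L
| FNeg : formula L -> formula L
| FAnd : formula L -> formula L -> formula L
| FEx : formula L -> formula L.   (* binds de Bruijn variable 0 *)

Fixpoint tbound L (k : nat) (t : term L) : Prop :=
  match t with
  | Var n => (n < k)%N
  | App f ts => forall i, tbound k (ts i)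
  end.

Fixpoint fbound L (k : nat) (phi : formula L) : Prop :=
  match phi with
  | FEq t u => tbound k t /\ tbound k u
  | FRel r ts => forall i, tbound k (ts i)
  | FNeg p => fbound k p
  | FAnd p q => fbound k p /\ fbound k q
  | FEx p => fbound k.+1 p
  end.

Fixpoint qfree L (phi : formula L) : Prop :=
  match phi with
  | FEq _ _ | FRel _ _ => True
  | FNeg p => qfree p
  | FAnd p q => qfree p /\ qfree q
  | FEx _ => False
  end.

(* L-structures are nonempty (pt is a witness). *)
Record structure (L : lang) := Structure {
  carrier :> Type;
  pt : carrier;
  interpF : forall f : Func L, ('I_(farity f) -> carrier) -> carrier;
  interpR : forall r : Rel L, ('I_(rarity r) -> carrier) -> Prop }.
Arguments interpF {L} s f _.
Arguments interpR {L} s r _.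
Arguments pt {L} s.

Section Semantics.
Variables (L : lang) (M : structure L).

Fixpoint teval (env : nat -> M) (t : term L) : M :=
  match t with
  | Var n => env n
  | App f ts => interpF M f (fun i => teval env (ts i))
  end.

Definition scons (a : M) (env : nat -> M) : nat -> M :=
  fun i => match i with 0 => a | S j => env j end.

Fixpoint sat (env : nat -> M) (phi : formula L) : Prop :=
  match phi with
  | FEq t u => teval env t = teval env u
  | FRel r ts => interpR M r (fun i => teval env (ts i))
  | FNeg p => ~ sat env p
  | FAnd p q => sat env p /\ sat env q
  | FEx p => exists a : M, sat (scons a env) p
  end.

Definition ext (n : nat) (a : 'I_n -> M) (e : nat -> M) : nat -> M :=
  fun i => if (insub i : option 'I_n) is Some j then a j else e (i - n).

(* An L(M)-formula in n free variables x_0..x_{n-1}: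
   phi(x, y) with parameters b substituted for y = (y_0..y_{m-1}). *)
Record lform (n : nat) := LForm {
  lf_phi : formula L;
  lf_m : nat;
  lf_par : 'I_lf_m -> M;
  lf_bound : fbound (n + lf_m) lf_phi }.
Arguments lf_phi {n} l.
Arguments lf_m {n} l.
Arguments lf_par {n} l _.
Arguments lf_bound {n} l.

Definition sat_par (n : nat) (phi : formula L) (m : nat) (b : 'I_m -> M)
  (a : 'I_n -> M) : Prop :=
  sat (ext a (ext b (fun _ => pt M))) phi.

Definition satL (n : nat) (a : 'I_n -> M) (psi : lform n) : Prop :=
  sat_par (lf_phi psi) (lf_par psi) a.

Definition lneg (n : nat) (psi : lform n) : lform n :=
  @LForm n (FNeg (lf_phi psi)) (lf_m psi) (lf_par psi) (lf_bound psi).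

Definition over (A : M -> Prop) (n : nat) (psi : lform n) : Prop :=
  forall j, A (lf_par psi j).

Definition subs (A B : M -> Prop) := forall x, A x -> B x.

Definition ltype (n : nat) := lform n -> Prop.

Definition realizes (n : nat) (p : ltype n) (a : 'I_n -> M) : Prop :=
  forall psi, p psi -> satL a psi.

Definition fin_sat (n : nat) (p : ltype n) : Prop :=
  forall l : seq (lform n), (forall psi, List.In psi l -> p psi) ->
    exists a : 'I_n -> M, forall psi, List.In psi l -> satL a psi.

Definition type_over (A : M -> Prop) (n : nat) (p : ltype n) : Prop :=
  forall psi, p psi -> over A psi.

Definition complete_type (A : M -> Prop) (n : nat) (p : ltype n) : Prop :=
  [/\ type_over A p, fin_sat p &
      forall psi : lform n, over A psi -> p psi \/ p (lneg psi)].

Definition same_types (n : nat) (p q : ltype n) : Prop :=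
  forall psi, p psi <-> q psi.

Definition algebraic_type (n : nat) (p : ltype n) : Prop :=
  exists s : seq ('I_n -> M), forall a, realizes p a -> List.In a s.

Definition realized_in (A : M -> Prop) (n : nat) (p : ltype n) : Prop :=
  exists a : 'I_n -> M, (forall i, A (a i)) /\ realizes p a.

Definition same_tp (A : M -> Prop) (m : nat) (b b' : 'I_m -> M) : Prop :=
  forall chi : lform m, over A chi -> (satL b chi <-> satL b' chi).

Definition dcl (A : M -> Prop) (x : M) : Prop :=
  exists psi : lform 1, over A psi /\
    forall a : 'I_1 -> M, satL a psi <-> a ord0 = x.

Definition acl (A : M -> Prop) (x : M) : Prop :=
  exists psi : lform 1, [/\ over A psi, satL (fun _ => x) psi &
    exists s : seq M, forall a : 'I_1 -> M, satL a psi -> List.In (a ord0) s].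

Definition divides (A : M -> Prop) (n : nat) (psi : lform n) : Prop :=
  exists (k : nat) (bs : nat -> 'I_(lf_m psi) -> M),
    (forall i, same_tp A (bs i) (lf_par psi)) /\
    forall l : seq nat, uniq l -> size l = k ->
      ~ exists a : 'I_n -> M, forall i, i \in l -> sat_par (lf_phi psi) (bs i) a.

Definition forks (A : M -> Prop) (n : nat) (p : ltype n) : Prop :=
  exists l : seq (lform n), (forall psi, List.In psi l -> divides A psi) /\
    forall a, realizes p a -> exists psi, List.In psi l /\ satL a psi.

Definition aut (s : M -> M) : Prop :=
  [/\ bijective s,
      forall f (a : 'I_(farity f) -> M), s (interpF M f a) = interpF M f (s \o a) &
      forall r (a : 'I_(rarity r) -> M), interpR M r a <-> interpR M r (s \o a)].

(* cardinality strictly below kappa, kappa represented by the type I *)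
Definition lt_kappa (I : Type) (T : Type) : Prop :=
  (exists f : T -> I, injective f) /\ ~ (exists g : I -> T, injective g).

Definition small (I : Type) (A : M -> Prop) : Prop := lt_kappa I {x | A x}.

Definition saturated (I : Type) : Prop :=
  forall (A : M -> Prop) (n : nat) (p : ltype n),
    small I A -> type_over A p -> fin_sat p -> exists a, realizes p a.

Definition strongly_homogeneous (I : Type) : Prop :=
  forall (A : M -> Prop) (f : M -> M), small I A ->
    (forall (phi : formula L) (env : nat -> M), (forall i, A (env i)) ->
        (sat env phi <-> sat (f \o env) phi)) ->
    exists s, aut s /\ forall x, A x -> s x = f x.

(* M is a monster model, with kappa > |L| + aleph_0 *)
Definition monster (I : Type) : Prop :=
  [/\ lt_kappa I nat, lt_kappa I (Func L), lt_kappa I (Rel L),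
      saturated I & strongly_homogeneous I].

Definition QE : Prop :=
  forall phi : formula L, exists psi : formula L,
    qfree psi /\ forall env, sat env phi <-> sat env psi.

(* (FS): every finite set of real tuples has a code which is a real tuple *)
Definition FS : Prop :=
  forall (n : nat) (S : seq ('I_n -> M)), exists (m : nat) (c : 'I_m -> M),
    forall s, aut s ->
      ((forall t, List.In t S -> List.In (s \o t) S) /\
       (forall t, List.In t S -> exists t', List.In t' S /\ s \o t' = t))
      <-> (forall j, s (c j) = c j).

Definition substructure (K : M -> Prop) : Prop :=
  forall f (a : 'I_(farity f) -> M), (forall i, K (a i)) -> K (interpF M f a).

Definition aut_on (K : M -> Prop) (s : M -> M) : Prop :=
  [/\ forall x, K x -> K (s x),
      forall y, K y -> exists x, K x /\ s x = y,
      forall x y, K x -> K y -> s x = s y -> x = y,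
      forall f (a : 'I_(farity f) -> M), (forall i, K (a i)) ->
        s (interpF M f a) = interpF M f (s \o a) &
      forall r (a : 'I_(rarity r) -> M), (forall i, K (a i)) ->
        (interpR M r a <-> interpR M r (s \o a))].

Definition G_action (gT : finGroupType) (K : M -> Prop) (sigma : gT -> M -> M) :=
  (forall g, aut_on K (sigma g)) /\
  (forall g h x, K x -> sigma (g * h)%g x = sigma g (sigma h x)).

Definition faithful (gT : finGroupType) (K : M -> Prop) (sigma : gT -> M -> M) :=
  forall g h : gT, g <> h -> exists x, K x /\ sigma g x <> sigma h x.

Definition fixed (gT : finGroupType) (K : M -> Prop) (sigma : gT -> M -> M) :
  M -> Prop := fun x => K x /\ forall g, sigma g x = x.

Definition dcl_closed (F : M -> Prop) : Prop := forall x, dcl F x <-> F x.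

Definition primary (F K : M -> Prop) : Prop :=
  forall x, (dcl K x /\ acl F x) <-> dcl F x.

Definition regular (F K : M -> Prop) : Prop := primary F K /\ dcl_closed F.

Definition alg_strongly_PAC (F K : M -> Prop) : Prop :=
  dcl_closed F /\
  forall (n : nat) (p : ltype n), complete_type F p -> algebraic_type p ->
    (exists q : ltype n, [/\ complete_type K q, (forall psi, p psi -> q psi),
        ~ forks F q &
        forall q' : ltype n, complete_type K q' -> (forall psi, p psi -> q' psi) ->
          ~ forks F q' -> same_types q q']) ->
    realized_in F p.

End Semantics.

(* Main.v *)
From mathcomp Require Import all_boot all_fingroup zify.
From Stdlib Require Import Classical ClassicalEpsilon FunctionalExtensionality.
Require Import Defs.
From mathcomp Require Import fingroup.
Set Implicit Arguments. Unset Strict Implicit. Unset Printing Implicit Defensive.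


Section Infra.
Variables (L : lang) (M : structure L).

Fixpoint trename (r : nat -> nat) (t : term L) : term L :=
  match t with Var n => Var L (r n) | App f ts => @App L f (fun i => trename r (ts i)) end.
Definition upr (r : nat -> nat) : nat -> nat :=
  fun i => match i with 0 => 0 | S j => S (r j) end.
Fixpoint frename (r : nat -> nat) (phi : formula L) : formula L :=
  match phi with
  | FEq t u => FEq (trename r t) (trename r u)
  | FRel R ts => @FRel L R (fun i => trename r (ts i))
  | FNeg p => FNeg (frename r p)
  | FAnd p q => FAnd (frename r p) (frename r q)
  | FEx p => FEx (frename (upr r) p)
  end.

Lemma teval_rename (env : nat -> M) r t : teval env (trename r t) = teval (env \o r) t.
Proof. elim: t => [n|f ts IH] //=; congr (interpF _ f _); apply: functional_extensionality => i; exact: IH. Qed.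

Lemma sat_rename phi : forall r (env : nat -> M), sat env (frename r phi) <-> sat (env \o r) phi.
Proof.
elim: phi => [t u|R ts|p IH|p IHp q IHq|p IH] r env /=.
- by rewrite !teval_rename.
- have -> : (fun i => teval env (trename r (ts i))) = (fun i => teval (env \o r) (ts i)).
    by apply: functional_extensionality => i; rewrite teval_rename.
  by [].
- by rewrite IH.
- by rewrite IHp IHq.
- split=> -[a Ha]; exists a; move: Ha; rewrite IH;
  (have -> : (scons a env \o upr r) = scons a (env \o r) by apply: functional_extensionality => -[|j]); by [].
Qed.

Lemma teval_agree k t (e1 e2 : nat -> M) : tbound k t -> (forall i, i < k -> e1 i = e2 i) -> teval e1 t = teval e2 t.
Proof.
elim: t => [n|f ts IH] /= Hb He; first exact: He.
congr (interpF _ f _); apply: functional_extensionality => i; exact: IH.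
Qed.

Lemma sat_agree phi : forall k (e1 e2 : nat -> M), fbound k phi -> (forall i, i < k -> e1 i = e2 i) -> (sat e1 phi <-> sat e2 phi).
Proof.
elim: phi => [t u|R ts|p IH|p IHp q IHq|p IH] k e1 e2 /= Hb He.
- by case: Hb => H1 H2; rewrite (teval_agree H1 He) (teval_agree H2 He).
- have -> : (fun i => teval e1 (ts i)) = (fun i => teval e2 (ts i)).
    by apply: functional_extensionality => i; exact: teval_agree (Hb i) He.
  by [].
- by rewrite (IH k e1 e2).
- by case: Hb => H1 H2; rewrite (IHp k e1 e2) // (IHq k e1 e2).
- split=> -[a Ha]; exists a; move: Ha; rewrite (IH k.+1 (scons a e1) (scons a e2)) //;
  by move=> [|i] //= /He.
Qed.

Lemma trename_bound k k' r (t : term L) : tbound k t -> (forall i, i < k -> r i < k') -> tbound k' (trename r t).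
Proof. elim: t => [n|f ts IH] /= Hb Hr; [exact: Hr| move=> i; exact: IH]. Qed.

Lemma frename_bound (phi : formula L) : forall k k' r, fbound k phi -> (forall i, i < k -> r i < k') -> fbound k' (frename r phi).
Proof.
elim: phi => [t u|R ts|p IH|p IHp q IHq|p IH] k k' r /= Hb Hr.
- by case: Hb => ??; split; apply: trename_bound; eauto.
- by move=> i; apply: trename_bound (Hb i) Hr.
- exact: IH Hb Hr.
- by case: Hb => ??; split; [apply: IHp|apply: IHq]; eauto.
- apply: (IH k.+1) => //; by case=> [|i] //= /Hr.
Qed.

Lemma tbound_mono k k' (t : term L) : tbound k t -> k <= k' -> tbound k' t.
Proof. elim: t => [n|f ts IH] /= Hb Hk; [exact: leq_trans Hb Hk| move=> i; exact: IH]. Qed.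

Lemma fbound_mono (phi : formula L) : forall k k', fbound k phi -> k <= k' -> fbound k' phi.
Proof.
elim: phi => [t u|R ts|p IH|p IHp q IHq|p IH] k k' /= Hb Hk.
- by case: Hb => ??; split; apply: tbound_mono; eauto.
- by move=> i; apply: tbound_mono (Hb i) Hk.
- exact: IH Hb Hk.
- by case: Hb => ??; split; [apply: IHp|apply: IHq]; eauto.
- exact: (IH k.+1).
Qed.

Lemma tbound_ex (t : term L) : exists k, tbound k t.
Proof.
elim: t => [n|f ts IH] /=; first by exists n.+1.
have [ks Hks] := fin_all_exists IH.
exists (\max_i ks i) => i; apply: tbound_mono (Hks i) _; exact: leq_bigmax.
Qed.

Lemma fbound_ex (phi : formula L) : exists k, fbound k phi.
Proof.
elim: phi => [t u|R ts|p IH|p [k1 H1] q [k2 H2]|p [k H]] /=.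
- have [k1 H1] := tbound_ex t; have [k2 H2] := tbound_ex u.
  exists (maxn k1 k2); split; apply: tbound_mono; eauto; [exact: leq_maxl|exact: leq_maxr].
- have [ks Hks] := fin_all_exists (fun i => tbound_ex (ts i)).
  exists (\max_i ks i) => i; apply: tbound_mono (Hks i) _; exact: leq_bigmax.
- exact: IH.
- exists (maxn k1 k2); split; apply: fbound_mono; eauto; [exact: leq_maxl|exact: leq_maxr].
- exists k; apply: fbound_mono H _; exact: leqnSn.
Qed.

Lemma ext_lt n (a : 'I_n -> M) e i (H : i < n) : ext a e i = a (Ordinal H).
Proof. by rewrite /ext insubT. Qed.
Lemma ext_ge n (a : 'I_n -> M) e i : n <= i -> ext a e i = e (i - n).
Proof. by move=> H; rewrite /ext insubF // ltnNge H. Qed.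

End Infra.


Section Aut.
Variables (L : lang) (M : structure L).

Lemma teval_aut (s : M -> M) : (forall f (a : 'I_(farity f) -> M), s (interpF M f a) = interpF M f (s \o a)) ->
  forall (env : nat -> M) t, s (teval env t) = teval (s \o env) t.
Proof.
move=> Hf env; elim=> [n|f ts IH] //=; rewrite Hf; congr (interpF _ f _).
by apply: functional_extensionality => i /=; rewrite IH.
Qed.

Lemma aut_sat (s : M -> M) : Defs.aut s -> forall (phi : formula L) (env : nat -> M), sat env phi <-> sat (s \o env) phi.
Proof.
case=> [[g sg gs] Hf Hr]; elim=> [t u|R ts|p IH|p IHp q IHq|p IH] env /=.
- rewrite -!teval_aut //; split; [by move->| by move/(can_inj sg)].
- rewrite Hr; have -> : (s \o (fun i => teval env (ts i))) = (fun i => teval (s \o env) (ts i)).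
    by apply: functional_extensionality => i /=; rewrite teval_aut.
  by [].
- by rewrite IH.
- by rewrite IHp IHq.
- split=> -[a Ha].
  + exists (s a); move: Ha; rewrite IH.
    by have -> : (s \o scons a env) = scons (s a) (s \o env) by apply: functional_extensionality => -[|j].
  + exists (g a); rewrite IH.
    by have -> : (s \o scons (g a) env) = scons a (s \o env) by apply: functional_extensionality => -[|j] /=; rewrite ?gs.
Qed.

Lemma aut_inv (s g : M -> M) : Defs.aut s -> cancel s g -> cancel g s -> Defs.aut g.
Proof.
case=> [_ Hf Hr] sg gs; split.
- by exists s.
- move=> f a; apply: (can_inj sg); rewrite gs Hf; congr (interpF _ f _).
  by apply: functional_extensionality => i /=; rewrite gs.
- move=> R a; rewrite (Hr R (g \o a)).
  by have -> : (s \o (g \o a)) = a by apply: functional_extensionality => i /=; rewrite gs.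
Qed.

Lemma sat_par_aut (s : M -> M) (phi : formula L) n m (b : 'I_m -> M) (a : 'I_n -> M) :
  Defs.aut s -> fbound (n + m) phi -> sat_par phi b a <-> sat_par phi (s \o b) (s \o a).
Proof.
move=> Hs Hb; rewrite /sat_par (aut_sat Hs); apply: sat_agree Hb _ => i Hi /=.
case: (ltnP i n) => Hin; first by rewrite !ext_lt.
rewrite !(ext_ge _ _ Hin); have Hm : i - n < m by rewrite ltn_subLR.
by rewrite !(ext_lt _ _ Hm).
Qed.

Lemma satL_aut (s : M -> M) n (a : 'I_n -> M) (psi : lform M n) :
  Defs.aut s -> satL a psi <-> sat_par (lf_phi psi) (s \o (@lf_par _ _ _ psi)) (s \o a).
Proof. move=> Hs; exact: sat_par_aut Hs (lf_bound psi). Qed.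

Lemma dcl_fix (s : M -> M) (A : M -> Prop) x : Defs.aut s -> (forall y, A y -> s y = y) -> dcl A x -> s x = x.
Proof.
move=> Hs HA [psi [Ho Hd]].
have H1 : satL (fun _ : 'I_1 => x) psi by rewrite Hd.
move: H1; rewrite (satL_aut _ _ Hs).
have -> : (s \o (@lf_par _ _ _ psi)) = (@lf_par _ _ _ psi) by apply: functional_extensionality => j /=; rewrite HA.
by move/(Hd (s \o (fun _ => x))).
Qed.

Lemma teval_sub (K : M -> Prop) : substructure K -> forall (env : nat -> M) t,
  (forall i, K (env i)) -> K (teval env t).
Proof. move=> HK env; elim=> [n|f ts IH] /= He; [exact: He| apply: HK => i; exact: IH]. Qed.

Lemma teval_auton (K : M -> Prop) s : substructure K -> aut_on K s -> forall (env : nat -> M) t,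
  (forall i, K (env i)) -> s (teval env t) = teval (s \o env) t.
Proof.
move=> HK [_ _ _ Hf _] env; elim=> [n|f ts IH] //= He.
rewrite Hf; last by move=> i; exact: teval_sub.
congr (interpF _ f _); apply: functional_extensionality => i /=; exact: IH.
Qed.

Lemma qfree_auton (K : M -> Prop) s : substructure K -> aut_on K s -> forall (phi : formula L) (env : nat -> M),
  qfree phi -> (forall i, K (env i)) -> sat env phi <-> sat (s \o env) phi.
Proof.
move=> HK Hs; have Hs' := Hs; case: Hs' => [_ _ Hinj _ Hr].
elim=> [t u|R ts|p IH|p IHp q IHq|p IH] env /= Hq He //.
- rewrite -!(teval_auton HK Hs) //; split; first by move->.
  by apply: Hinj; apply: teval_sub.
- rewrite Hr; last by move=> i; exact: teval_sub.
  have -> : (s \o (fun i => teval env (ts i))) = (fun i => teval (s \o env) (ts i)).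
    by apply: functional_extensionality => i /=; rewrite (teval_auton HK Hs).
  by [].
- by rewrite IH.
- by case: Hq => ??; rewrite IHp // IHq.
Qed.

Lemma extend_aut (I : Type) (K : M -> Prop) s : monster M I -> QE M -> substructure K -> small I K ->
  aut_on K s -> exists r, Defs.aut r /\ forall x, K x -> r x = s x.
Proof.
move=> [_ _ _ _ Hh] Hqe HK Hsm Hs; apply: (Hh K s Hsm) => phi env He.
have [psi [Hq Heq]] := Hqe phi; rewrite !Heq; exact: (qfree_auton HK Hs Hq He).
Qed.

End Aut.


Definition xdec (P : Prop) : bool := if excluded_middle_informative P then true else false.
Lemma xdecP (P : Prop) : reflect P (xdec P).
Proof. by rewrite /xdec; case: excluded_middle_informative => H; constructor. Qed.

Lemma sigE (T : Type) (P : T -> Prop) (w : T) (p1 p2 : P w) : exist P w p1 = exist P w p2.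
Proof. by rewrite (proof_irrelevance _ p1 p2). Qed.

Section Small.
Variable I : Type.

Lemma inj_shift (e : nat -> I) : injective e -> exists h : I -> I, injective h /\ forall i, h i <> e 0.
Proof.
move=> He.
pose h i := match excluded_middle_informative (exists n, e n = i) with
  | left H => e (proj1_sig (constructive_indefinite_description _ H)).+1
  | right _ => i end.
exists h; split.
- move=> i j; rewrite /h.
  case: excluded_middle_informative => Hi; case: excluded_middle_informative => Hj.
  + case: constructive_indefinite_description => n /= Hn.
    case: constructive_indefinite_description => m /= Hm.
    by move/He => -[E]; rewrite -Hn -Hm E.
  + move=> E; case: Hj; move: E; case: constructive_indefinite_description => n /= Hn E.
    by exists n.+1.
  + move=> E; case: Hi; move: E; case: constructive_indefinite_description => n /= Hn E.
    by exists n.+1.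
  + by [].
- move=> i; rewrite /h; case: excluded_middle_informative => Hi.
  + by case: constructive_indefinite_description => n /= Hn /He.
  + by move=> E; apply: Hi; exists 0.
Qed.

Lemma inj_avoid (e : nat -> I) (i0 : I) : injective e -> exists h : I -> I, injective h /\ forall i, h i <> i0.
Proof.
move=> He; have [h [Hh Hne]] := inj_shift He.
pose sw x := if xdec (x = e 0) then i0 else if xdec (x = i0) then e 0 else x.
have swK : cancel sw sw.
  move=> x; rewrite /sw; case: (xdecP (x = e 0)) => H1.
  - case: (xdecP (i0 = e 0)) => H2; first by rewrite H1 H2.
    by rewrite (introT (xdecP _) (erefl i0)).
  - case: (xdecP (x = i0)) => H3.
    + by rewrite (introT (xdecP _) (erefl (e 0))).
    + by rewrite (introF (xdecP _) H1) (introF (xdecP _) H3).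
exists (sw \o h); split.
- exact: inj_comp (can_inj swK) Hh.
- move=> i /= E; apply: (Hne i); apply: (can_inj swK); rewrite E /sw.
  by rewrite (introT (xdecP _) (erefl (e 0))).
Qed.

End Small.

Section Main.
Variables (L : lang) (M : structure L).

Lemma small_add (I : Type) (A : M -> Prop) x : lt_kappa I nat -> small I A ->
  small I (fun z => A z \/ z = x).
Proof.
move=> [[e He] _] [[f Hf] Hn]; split.
- have [h [Hh Hne]] := inj_shift He.
  exists (fun w : {z | A z \/ z = x} =>
    match excluded_middle_informative (A (proj1_sig w)) with
    | left H => h (f (exist _ _ H)) | right _ => e 0 end).
  move=> [w1 p1] [w2 p2] /=.
  case: excluded_middle_informative => H1; case: excluded_middle_informative => H2.
  + move/Hh/Hf => [E]; subst w2; exact: sigE.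
  + by move/Hne.
  + by move/esym/Hne.
  + case: p1 => // E1; case: p2 => // E2; subst=> _; exact: sigE.
- move=> [g Hg]; apply: Hn.
  have [k [Hk Hx]] : exists k : I -> I, injective k /\ forall i, proj1_sig (g (k i)) <> x.
    case: (classic (exists i0, proj1_sig (g i0) = x)) => [[i0 Hi0]|Hno].
    + have [k [Hk Hk0]] := inj_avoid i0 He; exists k; split=> // i E; apply: (Hk0 i).
      apply: Hg; case: (g (k i)) E => [w1 p1]; case: (g i0) Hi0 => [w2 p2] /= E1 E2.
      subst; exact: sigE.
    + exists id; split=> // i E; apply: Hno; by exists i.
  have HA i : A (proj1_sig (g (k i))).
    by case: (g (k i)) (Hx i) => [w [p|p]] //=.
  exists (fun i => exist _ _ (HA i)) => i j [E]; apply: Hk; apply: Hg.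
  move: E; case: (g (k i)) => [w1 p1]; case: (g (k j)) => [w2 p2] /= E; subst.
  exact: sigE.
Qed.

Lemma small_sub (I : Type) (A B : M -> Prop) : small I A -> subs B A -> small I B.
Proof.
move=> [[f Hf] Hn] HBA; split.
- exists (fun w : {z | B z} => f (exist _ _ (HBA _ (proj2_sig w)))).
  move=> [w1 p1] [w2 p2] /= /Hf [E]; subst; exact: sigE.
- move=> [g Hg]; apply: Hn; exists (fun i => exist _ _ (HBA _ (proj2_sig (g i)))).
  move=> i j [E]; apply: Hg; move: E; case: (g i) => [w1 p1]; case: (g j) => [w2 p2] /= E.
  subst; exact: sigE.
Qed.

End Main.


Section Forms.
Variables (L : lang) (M : structure L).

Notation par psi := (@lf_par _ _ _ psi).

Lemma ext_ord n (a : 'I_n -> M) e (i : 'I_n) : ext a e i = a i.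
Proof. by rewrite (ext_lt _ _ (ltn_ord i)); congr a; apply: val_inj. Qed.

Lemma true_bound n : fbound (n + 0) (FEx (FEq (Var L 0) (Var L 0))).
Proof. by []. Qed.
Definition lf_true n : lform M n := LForm (fun _ : 'I_0 => pt M) (true_bound n).
Lemma satL_true n (a : 'I_n -> M) : satL a (lf_true n).
Proof. by exists (pt M). Qed.
Lemma over_true (A : M -> Prop) n : Defs.over A (lf_true n).
Proof. by case. Qed.

Definition andr n m1 (i : nat) := if i < n then i else i + m1.
Lemma and_bound n m1 m2 (phi1 phi2 : formula L) : fbound (n + m1) phi1 -> fbound (n + m2) phi2 ->
  fbound (n + (m1 + m2)) (FAnd phi1 (frename (andr n m1) phi2)).
Proof.
move=> H1 H2; split.
- apply: fbound_mono H1 _; by rewrite leq_add2l leq_addr.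
- apply: frename_bound H2 _ => i Hi; rewrite /andr; case: ifP => Hin.
  + exact: leq_trans Hin (leq_addr _ _).
  + move: Hi (negbT Hin); rewrite -ltnNge; lia.
Qed.

Definition cat_par m1 m2 (b1 : 'I_m1 -> M) (b2 : 'I_m2 -> M) : 'I_(m1 + m2) -> M :=
  fun j => ext b1 (ext b2 (fun _ => pt M)) j.

Definition lf_and n (p1 p2 : lform M n) : lform M n :=
  LForm (cat_par (par p1) (par p2)) (and_bound (lf_bound p1) (lf_bound p2)).

Lemma env1 n m1 m2 (a : 'I_n -> M) (b1 : 'I_m1 -> M) (b2 : 'I_m2 -> M) i : i < n + m1 ->
  ext a (ext (cat_par b1 b2) (fun _ => pt M)) i = ext a (ext b1 (fun _ => pt M)) i.
Proof.
move=> Hi; case: (ltnP i n) => Hin; first by rewrite !(ext_lt _ _ Hin).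
rewrite !(ext_ge _ _ Hin); have H' : i - n < m1 by rewrite ltn_subLR.
have H'' : i - n < m1 + m2 by exact: leq_trans H' (leq_addr _ _).
by rewrite (ext_lt _ _ H'') /cat_par /= !(ext_lt _ _ H').
Qed.

Lemma env2 n m1 m2 (a : 'I_n -> M) (b1 : 'I_m1 -> M) (b2 : 'I_m2 -> M) i : i < n + m2 ->
  ext a (ext (cat_par b1 b2) (fun _ => pt M)) (andr n m1 i) = ext a (ext b2 (fun _ => pt M)) i.
Proof.
move=> Hi; rewrite /andr; case: (ltnP i n) => Hin; first by rewrite !(ext_lt _ _ Hin).
have Hin' : n <= i + m1 by exact: leq_trans Hin (leq_addr _ _).
rewrite (ext_ge _ _ Hin') (ext_ge _ _ Hin); have H' : i - n < m2 by rewrite ltn_subLR.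
have E : i + m1 - n = m1 + (i - n) by rewrite addnC addnBA.
have H'' : i + m1 - n < m1 + m2 by rewrite E ltn_add2l.
rewrite (ext_lt _ _ H'') /cat_par /= E (ext_ge _ _ (leq_addr _ _)) addKn.
by rewrite !(ext_lt _ _ H').
Qed.

Lemma satL_and n (a : 'I_n -> M) (p1 p2 : lform M n) : satL a (lf_and p1 p2) <-> satL a p1 /\ satL a p2.
Proof.
rewrite /satL /sat_par /=; rewrite sat_rename.
rewrite (sat_agree (k := n + lf_m p1) (e2 := ext a (ext (par p1) (fun _ => pt M))) (lf_bound p1)); last first.
  by move=> i Hi; rewrite env1.
rewrite (sat_agree (k := n + lf_m p2) (e2 := ext a (ext (par p2) (fun _ => pt M))) (lf_bound p2)) //.
by move=> i Hi /=; rewrite env2.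
Qed.

Lemma over_and (A : M -> Prop) n (p1 p2 : lform M n) : Defs.over A p1 -> Defs.over A p2 -> Defs.over A (lf_and p1 p2).
Proof.
move=> H1 H2 j /=; rewrite /cat_par; case: (ltnP j (lf_m p1)) => Hj.
- by rewrite (ext_lt _ _ Hj).
- rewrite (ext_ge _ _ Hj); have H' : j - lf_m p1 < lf_m p2 by rewrite ltn_subLR.
  by rewrite (ext_lt _ _ H').
Qed.

Definition lf_all n (l : seq (lform M n)) : lform M n := foldr (@lf_and n) (lf_true n) l.
Lemma satL_all n (a : 'I_n -> M) l : satL a (lf_all l) <-> forall psi, List.In psi l -> satL a psi.
Proof.
elim: l => [|p l IH] /=; first by split=> // _; exact: satL_true.
rewrite satL_and IH; split; first by case=> H1 H2 psi [<-|/H2].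
by move=> H; split; [apply: H; left| move=> psi Hp; apply: H; right].
Qed.
Lemma over_all (A : M -> Prop) n (l : seq (lform M n)) : (forall psi, List.In psi l -> Defs.over A psi) -> Defs.over A (lf_all l).
Proof.
elim: l => [|p l IH] /= H; first exact: over_true.
apply: over_and; [apply: H; left| apply: IH => psi Hp; apply: H; right] => //.
Qed.

Lemma eqc_bound : fbound (1 + 1) (FEq (Var L 0) (Var L 1)).
Proof. by []. Qed.
Definition lf_eqc (c : M) : lform M 1 := LForm (fun _ : 'I_1 => c) eqc_bound.
Lemma satL_eqc c (a : 'I_1 -> M) : satL a (lf_eqc c) <-> a ord0 = c.
Proof.
rewrite /satL /sat_par /= (ext_lt _ _ (ltn0Sn 0)) (ext_ge _ _ (leqnn 1)) subnn.
by rewrite (ext_lt _ _ (ltn0Sn 0)) (_ : Ordinal _ = ord0) //; apply: val_inj.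
Qed.
Lemma over_eqc (A : M -> Prop) c : A c -> Defs.over A (lf_eqc c).
Proof. by move=> H j. Qed.

Lemma one_funE (a : 'I_1 -> M) : a = (fun _ => a ord0).
Proof. by apply: functional_extensionality => i; rewrite (ord1 i). Qed.

End Forms.


Section Hom.
Variables (L : lang) (M : structure L).
Notation par psi := (@lf_par _ _ _ psi).

Lemma env_form (A : M -> Prop) x (phi : formula L) k (env : nat -> M) :
  fbound k phi -> (forall j, A (env j) \/ env j = x) ->
  exists chi : lform M 1, Defs.over A chi /\
    forall z, satL (fun _ => z) chi <-> sat (fun j => if xdec (env j = x) then z else env j) phi.
Proof.
move=> Hb He; case: (classic (exists d, A d)) => [[d Hd]|Hno].
- pose r j := if xdec (env j = x) then 0 else j.+1.
  pose p : 'I_k -> M := fun j => if xdec (env j = x) then d else env j.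
  have Hb' : fbound (1 + k) (frename r phi).
    apply: frename_bound Hb _ => j Hj; rewrite /r; case: (xdecP (env j = x)) => //.
  exists (LForm p Hb'); split.
  + move=> j /=; rewrite /p; case: (xdecP (env j = x)) => // H; by case: (He j).
  + move=> z; rewrite /satL /sat_par /= sat_rename; apply: sat_agree Hb _ => j Hj /=.
    rewrite /r; case: (xdecP (env j = x)) => H.
    * by rewrite (ext_lt _ _ (ltn0Sn 0)).
    * rewrite (ext_ge _ _ (ltn0Sn j)) subn1 /= (ext_lt _ _ Hj) /p /=.
      by case: (xdecP (env j = x)).
- have Hb' : fbound (1 + 0) (frename (fun _ => 0) phi).
    by apply: frename_bound Hb _.
  exists (LForm (fun _ : 'I_0 => pt M) Hb'); split; first by case.
  move=> z; rewrite /satL /sat_par /= sat_rename; apply: sat_agree Hb _ => j Hj /=.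
  rewrite (ext_lt _ _ (ltn0Sn 0)); case: (xdecP (env j = x)) => // H.
  by case: (He j) => // HA; case: Hno; exists (env j).
Qed.

Lemma hom1 (I : Type) (A : M -> Prop) x y : monster M I -> small I A ->
  (forall chi : lform M 1, Defs.over A chi -> (satL (fun _ => x) chi <-> satL (fun _ => y) chi)) ->
  exists t, [/\ Defs.aut t, (forall z, A z -> t z = z) & t x = y].
Proof.
move=> Hm Hs Hxy.
have HAx : A x -> y = x.
  move=> Ax; have := Hxy (lf_eqc x) (over_eqc Ax); rewrite !satL_eqc => H.
  by apply/H.
have Hm' := Hm; case: Hm' => [Hn _ _ _ Hh].
pose f z := if xdec (z = x) then y else z.
have [s [Hs1 Hs2]] : exists s, Defs.aut s /\ forall z, (A z \/ z = x) -> s z = f z.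
  apply: (Hh _ f (small_add x Hn Hs)) => phi env He.
  have [k Hk] := fbound_ex phi.
  have [chi [Hco Hchi]] := env_form Hk He.
  have E2 : f \o env = (fun j => if xdec (env j = x) then y else env j) by [].
  have E1 : env = (fun j => if xdec (env j = x) then x else env j).
    by apply: functional_extensionality => j; case: (xdecP (env j = x)).
  rewrite E2 {1}E1 -Hchi Hxy // Hchi //.
exists s; split => //.
- move=> z Hz; rewrite Hs2; last by left.
  rewrite /f; case: (xdecP (z = x)) => // E; subst z; exact: HAx.
- by rewrite Hs2 ?/f; [case: (xdecP (x = x))| right].
Qed.

Lemma inv_dcl (I : Type) (A : M -> Prop) x : monster M I -> small I A ->
  (forall t, Defs.aut t -> (forall z, A z -> t z = z) -> t x = x) -> dcl A x.
Proof.
move=> Hm Hs Hinv; apply: NNPP => Hnd.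
have Hm' := Hm; case: Hm' => [Hn _ _ Hsat _].
pose neqx := lneg (lf_eqc x).
pose P : ltype M 1 := fun psi => (Defs.over A psi /\ satL (fun _ => x) psi) \/ psi = neqx.
have [y Hy] : exists y, realizes P y.
  apply: (Hsat (fun z => A z \/ z = x) 1 P (small_add x Hn Hs)).
  - move=> psi [[Ho _]|->] j; [left; exact: Ho| by right].
  - move=> l Hl.
    pose l' := map (fun psi => if xdec (Defs.over A psi /\ satL (fun _ => x) psi) then psi else lf_true M 1) l.
    have Ho : Defs.over A (lf_all l').
      apply: over_all => psi /List.in_map_iff [q [<- _]].
      by case: (xdecP (Defs.over A q /\ _)) => [[]|_] //; exact: over_true.
    have Hx : satL (fun _ => x) (lf_all l').
      apply/satL_all => psi /List.in_map_iff [q [<- _]].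
      by case: (xdecP (Defs.over A q /\ _)) => [[]|_] //; exact: satL_true.
    have [a Ha] : exists a, ~ (satL a (lf_all l') <-> a ord0 = x).
      apply: NNPP => H; apply: Hnd; exists (lf_all l'); split => // a.
      by apply: NNPP => H'; apply: H; exists a.
    have Hax : a ord0 <> x.
      by move=> E; apply: Ha; rewrite (one_funE a) E.
    have Hsa : satL a (lf_all l') by apply: NNPP => H; apply: Ha; split.
    exists a => psi Hpsi; case: (Hl psi Hpsi) => [Hp|->].
    + move/satL_all: Hsa; apply; apply/List.in_map_iff; exists psi; split => //.
      by case: (xdecP (Defs.over A psi /\ _)).
    + by rewrite /neqx /= => /satL_eqc.
have Hy0 : y ord0 <> x.
  by move=> E; have := Hy neqx (or_intror erefl); rewrite /neqx /satL /= => H; apply: H; apply/satL_eqc.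
have Hsame : forall chi : lform M 1, Defs.over A chi -> (satL (fun _ => x) chi <-> satL (fun _ => y ord0) chi).
  move=> chi Hc; rewrite -one_funE; split => H.
  - by apply: Hy; left.
  - apply: NNPP => H'; have := Hy (lneg chi) (or_introl (conj Hc H')); exact.
have [t [Ht1 Ht2 Ht3]] := hom1 Hm Hs Hsame.
by apply: Hy0; rewrite -Ht3; apply: Hinv.
Qed.

End Hom.


Lemma in_list (T : eqType) (x : T) (s : seq T) : x \in s -> List.In x s.
Proof. elim: s => [|y s IH] //=; rewrite inE => /orP [/eqP ->|/IH]; [by left|by right]. Qed.

Section Gal.
Variables (L : lang) (M : structure L).
Notation par psi := (@lf_par _ _ _ psi).

Lemma sigma1 (gT : finGroupType) (K : M -> Prop) (sigma : gT -> M -> M) x : G_action K sigma -> K x -> sigma 1%g x = x.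
Proof.
move=> [Ha Hm] Kx; have := Hm 1%g 1%g x Kx; rewrite mulg1.
case: (Ha 1%g) => [HK _ Hinj _ _] E; apply: esym; apply: Hinj => //; exact: HK.
Qed.

Lemma galois (I : Type) (gT : finGroupType) (K : M -> Prop) (sigma : gT -> M -> M) (t : M -> M) m (kb : 'I_m -> M) :
  monster M I -> QE M -> FS M -> substructure K -> small I K -> G_action K sigma -> dcl_closed K ->
  Defs.aut t -> (forall z, fixed K sigma z -> t z = z) -> (forall j, K (kb j)) ->
  exists g, forall j, t (kb j) = sigma g (kb j).
Proof.
move=> Hmon Hqe Hfs HK Hsm Hga Hdcl Ht Htf Hkb.
pose S := map (fun g => fun j => sigma g (kb j)) (enum gT).
have InS g : List.In (fun j => sigma g (kb j)) S.
  apply: List.in_map; apply: in_list; by rewrite mem_enum.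
have pres (s : M -> M) :
   (forall h, exists h', s \o (fun j => sigma h (kb j)) = (fun j => sigma h' (kb j))) ->
   (forall h, exists h', s \o (fun j => sigma h' (kb j)) = (fun j => sigma h (kb j))) ->
   (forall t, List.In t S -> List.In (s \o t) S) /\
   (forall t, List.In t S -> exists t', List.In t' S /\ s \o t' = t).
  move=> H1 H2; split=> t0 /List.in_map_iff [h [<- _]].
  - by have [h' ->] := H1 h.
  - by have [h' E] := H2 h; exists (fun j => sigma h' (kb j)).
have [mc [c Hc]] := Hfs m S.
have HKs g z : K z -> K (sigma g z) by case: Hga => Ha _; case: (Ha g) => H _ _ _ _; exact: H.
have HKc j : K (c j).
  apply/Hdcl; apply: (inv_dcl Hmon Hsm) => s Hs HsK; move: j; apply/(Hc s Hs).
  apply: pres => h; exists h; apply: functional_extensionality => j /=; rewrite HsK //; exact: HKs.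
have Hfc j : fixed K sigma (c j).
  split => // g; case: Hga => Ha Hmul.
  have [r [Hr HrK]] := extend_aut Hmon Hqe HK Hsm (Ha g).
  rewrite -HrK //; move: j; apply/(Hc r Hr); apply: pres => h.
  - exists (g * h)%g; apply: functional_extensionality => j /=.
    by rewrite HrK; [rewrite (Hmul g h (kb j) (Hkb j))| exact: HKs].
  - exists (g^-1 * h)%g; apply: functional_extensionality => j /=.
    by rewrite HrK; [rewrite -(Hmul g (g^-1 * h)%g (kb j) (Hkb j)) mulKVg| exact: HKs].
have [Hp _] := (Hc t Ht).2 (fun j => Htf _ (Hfc j)).
have /List.in_map_iff [g [E _]] := Hp _ (InS 1%g).
exists g => j; have := congr1 (fun f => f j) E => /= ->.
by rewrite (sigma1 Hga).
Qed.

End Gal.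


Section Div.
Variables (L : lang) (M : structure L).
Notation par psi := (@lf_par _ _ _ psi).

Lemma inf_pigeon (f : nat -> M) (s : seq M) : forall (D : nat -> Prop),
  (forall n, exists i, n <= i /\ D i) -> (forall i, D i -> List.In (f i) s) ->
  exists y, forall n, exists i, [/\ n <= i, D i & f i = y].
Proof.
elim: s => [|y s IH] D Hinf Hin.
  by have [i [_ /Hin]] := Hinf 0.
case: (classic (forall n, exists i, [/\ n <= i, D i & f i = y])) => [H|H]; first by exists y.
have [n0 Hn0] := not_all_ex_not _ _ H.
have HD' : forall n, exists i, n <= i /\ (D i /\ n0 <= i).
  move=> n; have [i [Hi HD]] := Hinf (maxn n n0); exists i.
  by split; [exact: leq_trans (leq_maxl _ _) Hi| split=> //; exact: leq_trans (leq_maxr _ _) Hi].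
have Hin' : forall i, D i /\ n0 <= i -> List.In (f i) s.
  move=> i [HD Hi]; case: (Hin i HD) => // E.
  by case: Hn0; exists i; split.
have [y' Hy'] := IH _ HD' Hin'.
exists y' => n; have [i [H1 [H2 _] H3]] := Hy' n; by exists i.
Qed.

Lemma inf_list (E : nat -> Prop) : (forall n, exists i, n <= i /\ E i) ->
  forall k, exists l : seq nat, [/\ uniq l, size l = k & forall i, i \in l -> E i].
Proof.
move=> Hinf k.
suff [l [N [H1 H2 H3 H4]]] : exists l : seq nat, exists N, [/\ uniq l, size l = k, forall i, i \in l -> E i & forall i, i \in l -> i < N].
  by exists l.
elim: k => [|k [l [N [H1 H2 H3 H4]]]]; first by exists [::], 0.
have [i [Hi HE]] := Hinf N; exists (i :: l), i.+1; split => /=.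
- rewrite H1 andbT; apply/negP => /H4; rewrite ltnNge Hi.
  by [].
- by rewrite H2.
- by move=> j; rewrite inE => /orP [/eqP ->|/H3].
- move=> j; rewrite inE => /orP [/eqP ->|/H4 Hj] //; exact: leq_trans Hj (leq_trans Hi (leqnSn _)).
Qed.

Definition rt m (i : nat) := if i is 0 then 0 else i + m.

Lemma chi_bound m mt (phit phip : formula L) : fbound (1 + mt) phit -> fbound (1 + m) phip ->
  fbound (m + mt) (FEx (FAnd (frename (rt m) phit) phip)).
Proof.
move=> Ht Hp /=; split.
- apply: frename_bound Ht _ => -[|j] //= Hj; lia.
- apply: fbound_mono Hp _; lia.
Qed.

Lemma ext1_0 (a : M) e : ext (fun _ : 'I_1 => a) e 0 = a.
Proof. by rewrite (ext_lt _ _ (ltn0Sn 0)). Qed.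
Lemma ext1_S (a : M) e j : ext (fun _ : 'I_1 => a) e j.+1 = e j.
Proof. by rewrite (ext_ge _ _ (ltn0Sn j)) subn1. Qed.

Definition chi_of (theta psi : lform M 1) : lform M (lf_m psi) :=
  LForm (par theta) (chi_bound (lf_bound theta) (lf_bound psi)).

Lemma satL_chi (theta psi : lform M 1) (yv : 'I_(lf_m psi) -> M) :
  satL yv (chi_of theta psi) <-> exists a, satL (fun _ => a) theta /\ sat_par (lf_phi psi) yv (fun _ : 'I_1 => a).
Proof.
rewrite /satL /sat_par /=; split => -[a Ha]; exists a; move: Ha; rewrite sat_rename.
- rewrite (sat_agree (e2 := ext (fun _ : 'I_1 => a) (ext (par theta) (fun _ => pt M))) (lf_bound theta)); last first.
    move=> [|j] Hj /=; first by rewrite ext1_0.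
    by rewrite ext1_S (ext_ge _ _ (leq_addl _ _)) addnK.
  rewrite (sat_agree (e2 := ext (fun _ : 'I_1 => a) (ext yv (fun _ => pt M))) (lf_bound psi)) //.
  move=> [|j] Hj /=; first by rewrite ext1_0.
  by rewrite ext1_S; rewrite add1n ltnS in Hj; rewrite !(ext_lt _ _ Hj).
- rewrite (sat_agree (e2 := ext (fun _ : 'I_1 => a) (ext (par theta) (fun _ => pt M))) (lf_bound theta)); last first.
    move=> [|j] Hj /=; first by rewrite ext1_0.
    by rewrite ext1_S (ext_ge _ _ (leq_addl _ _)) addnK.
  rewrite (sat_agree (e2 := ext (fun _ : 'I_1 => a) (ext yv (fun _ => pt M))) (lf_bound psi)) //.
  move=> [|j] Hj /=; first by rewrite ext1_0.
  by rewrite ext1_S; rewrite add1n ltnS in Hj; rewrite !(ext_lt _ _ Hj).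
Qed.

Lemma acl_nodiv (A : M -> Prop) x (psi : lform M 1) : acl A x -> satL (fun _ => x) psi -> ~ divides A psi.
Proof.
move=> [theta [Hto Htx [s Hs]]] Hpx [k [bs [Hsame Hinc]]].
have Hc : satL (par psi) (chi_of theta psi).
  by apply/satL_chi; exists x; split.
have Hi i : exists a, satL (fun _ => a) theta /\ sat_par (lf_phi psi) (bs i) (fun _ : 'I_1 => a).
  by apply/satL_chi; apply/(Hsame i) => //; exact: Hto.
pose ya i := proj1_sig (constructive_indefinite_description _ (Hi i)).
have Hya i : satL (fun _ => ya i) theta /\ sat_par (lf_phi psi) (bs i) (fun _ : 'I_1 => ya i).
  by rewrite /ya; case: constructive_indefinite_description.
have [y Hy] := inf_pigeon (f := ya) (s := s) (D := fun _ => True) (fun n => ex_intro _ n (conj (leqnn n) I))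
  (fun i _ => Hs _ (Hya i).1).
have Hinf : forall n, exists i, n <= i /\ ya i = y.
  by move=> n; have [i [H1 _ H3]] := Hy n; exists i.
have [l [Hu Hsz Hl]] := inf_list Hinf k.
apply: (Hinc l Hu Hsz); exists (fun _ => y) => i /Hl <-; exact: (Hya i).2.
Qed.

End Div.


Lemma tp_complete (L : lang) (M : structure L) (A : M -> Prop) n (a : 'I_n -> M) :
  complete_type A (fun psi : lform M n => Defs.over A psi /\ satL a psi).
Proof.
split.
- by move=> psi [].
- by move=> l Hl; exists a => psi /Hl [].
- move=> psi Ho; case: (classic (satL a psi)) => H; [left|right]; by split.
Qed.

Theorem lemma3p9 (L : lang) (M : structure L) (I : Type)
  (gT : finGroupType)
  (K K' : M -> Prop) (sigma sigma' : gT -> M -> M) :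
  monster M I -> QE M -> FS M ->
  substructure K -> small I K -> substructure K' -> small I K' ->
  G_action K sigma -> G_action K' sigma' ->
  subs K K' -> (forall g x, K x -> sigma' g x = sigma g x) ->
  faithful K sigma -> dcl_closed K ->
  alg_strongly_PAC (fixed K sigma) K ->
  regular (fixed K sigma) (fixed K' sigma').
Proof.
move=> Hmon Hqe Hfs HK HsK HK' HsK' Hga Hga' Hsub Hagree _ Hdcl [HFdcl Hpac].
have HFF' z : fixed K sigma z -> fixed K' sigma' z.
  by move=> [Kz Hz]; split; [exact: Hsub| move=> g; rewrite Hagree].
have HFK z : fixed K sigma z -> K z by case.
have HsF : small I (fixed K sigma) by apply: small_sub HsK _.
split => //.
move=> x; split; last first.
  move=> [psi [Ho Hd]]; split.
  - by exists psi; split => // j; apply: HFF'.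
  - exists psi; split => //; first by apply/Hd.
    by exists [:: x] => a /Hd ->; left.
move=> [Hdx Hax]; apply/HFdcl.
pose p := fun psi : lform M 1 => Defs.over (fixed K sigma) psi /\ satL (fun _ => x) psi.
pose q := fun psi : lform M 1 => Defs.over K psi /\ satL (fun _ => x) psi.
have Halg : algebraic_type p.
  case: Hax => [theta [Ho Hx [s Hs]]].
  exists (map (fun y => fun _ : 'I_1 => y) s) => a Ha.
  rewrite (one_funE a); apply: List.in_map; apply: Hs; exact: Ha.
have Hpq psi : p psi -> q psi by move=> [Ho Hx]; split => // j; apply: HFK.
have Hnf : ~ forks (fixed K sigma) q.
  move=> [l [Hdiv Hreal]]; have [psi [Hin Hps]] := Hreal (fun _ => x) (fun psi H => H.2).
  exact: (acl_nodiv Hax Hps (Hdiv psi Hin)).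
have Hkey : forall q' : ltype M 1, complete_type K q' -> (forall psi, p psi -> q' psi) -> forall psi, q psi -> q' psi.
  move=> q' [Hq'o Hq'f Hq'c] Hpq' psi [Hpo Hpx].
  have [y Hy] : exists y, realizes q' y.
    by case: Hmon => [_ _ _ Hsat _]; apply: (Hsat K 1 q' HsK Hq'o Hq'f).
  case: (Hq'c psi Hpo) => // Hneg; exfalso.
  have Hyn : ~ satL y psi by exact: (Hy _ Hneg).
  apply: Hyn.
  have Hsame : forall chi : lform M 1, Defs.over (fixed K sigma) chi ->
      (satL (fun _ => x) chi <-> satL (fun _ => y ord0) chi).
    move=> chi Hc; rewrite -one_funE; split => H.
    - by apply: Hy; apply: Hpq'.
    - apply: NNPP => H'; have := Hy (lneg chi) (Hpq' (lneg chi) (conj Hc H')); exact.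
  have [t [Ht Htf Htx]] := hom1 Hmon HsF Hsame.
  have Ht' := Ht; case: Ht' => [[g tg gt] _ _].
  have Hg : Defs.aut g := aut_inv Ht tg gt.
  have Hgf z : fixed K sigma z -> g z = z by move=> Hz; rewrite -{1}(Htf z Hz) tg.
  have [h Hh] := galois Hmon Hqe Hfs HK HsK Hga Hdcl Hg Hgf Hpo.
  have [r [Hr HrK]] := extend_aut Hmon Hqe HK' HsK' (Hga'.1 h).
  have Hrx : r x = x.
    apply: (dcl_fix Hr) Hdx => z [Kz Hz]; by rewrite HrK.
  rewrite (one_funE y) -Htx (satL_aut _ _ Hg).
  move: Hpx; rewrite (satL_aut _ _ Hr).
  have -> : (g \o (fun _ : 'I_1 => t x)) = (fun _ => x) by apply: functional_extensionality => i /=; rewrite tg.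
  have -> : (r \o (fun _ : 'I_1 => x)) = (fun _ => x) by apply: functional_extensionality => i /=; rewrite Hrx.
  have -> : (g \o (@lf_par _ _ _ psi)) = (r \o (@lf_par _ _ _ psi)) by apply: functional_extensionality => j /=; rewrite Hh HrK ?Hagree //; apply: Hsub.
  by [].
have Hex : exists q0 : ltype M 1, [/\ complete_type K q0, (forall psi, p psi -> q0 psi),
        ~ forks (fixed K sigma) q0 &
        forall q' : ltype M 1, complete_type K q' -> (forall psi, p psi -> q' psi) ->
          ~ forks (fixed K sigma) q' -> same_types q0 q'].
  exists q; split.
  + exact: tp_complete.
  + exact: Hpq.
  + exact: Hnf.
  + move=> q' Hq' Hpq' _ psi; split; first exact: (Hkey q' Hq' Hpq').
    move=> Hq'psi; case: Hq' => [Ho Hf Hc]; have Hpo := Ho _ Hq'psi.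
    case: (classic (satL (fun _ => x) psi)) => Hx; first by split.
    have Hn : q' (lneg psi) by apply: (Hkey q' (And3 Ho Hf Hc) Hpq'); split.
    have Hl : forall phi, List.In phi [:: psi; lneg psi] -> q' phi.
      by move=> phi [<-|[<-|[]]].
    have [b Hb] := Hf _ Hl.
    exfalso; apply: (Hb (lneg psi) (or_intror (or_introl erefl))); apply: Hb; by left.
have [a [HaF Hra]] := Hpac 1 p (tp_complete _ _) Halg Hex.
have Ha0 := HaF ord0.
case: (classic (satL (fun _ => x) (lf_eqc (a ord0)))) => H.
- by move/satL_eqc: H => /= ->.
- have := Hra (lneg (lf_eqc (a ord0))) (conj (over_eqc Ha0) H).
  by rewrite /satL /= => H'; exfalso; apply: H'; apply/satL_eqc.
Qed.
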